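(* Let $\Sigma$ be an alphabet and $R'\subseteq R\subseteq\Sigma^*\times\Sigma^*$. Let $P$ be a finite derivational proof in $\langle\Sigma\mid R'\rangle$. If $P\models R$ and the derivation graph $\Gamma_D(P)$ is acyclic, then there exists a sequence of exactly $|R\setminus R'|$ $\mathbf{Rel}(+)$ transformations between $\langle\Sigma\mid R'\rangle$ and $\langle\Sigma\mid R\rangle$.
   Context: For an alphabet $\Sigma$, $\Sigma^*$ is the free monoid of words. For $S\subseteq\Sigma^*\times\Sigma^*$, $\langle\Sigma\mid S\rangle$ is the quotient of $\Sigma^*$ by the congruence generated by $S$; for words $u,v$ and $(q,r)\in\Sigma^*\times\Sigma^*$ we write $u\xrightarrow{(q,r)}v$ if $u=sqt$ and $v=srt$ for some words $s,t$; $u\sim_Sv$ means $u$ is transformed into $v$ by finitely many steps $\xrightarrow{\rho}$ or their reverses with $\rho\in S$. A $\mathbf{Rel}(+)$ transformation passes from $\langle\Sigma\mid S\rangle$ to $\langle\Sigma\mid S\cup\{(q,r)\}\rangle$ where $q\sim_Sr$; a sequence of $m$ such transformations between two presentations is a chain of $m+1$ presentations from the first to the second, each obtained from the previous by one such transformation. Let $L(\Sigma)=\mathbb{N}\times(\Sigma^*\times\Sigma^* )$ (labels). A derivational proof in $\langle\Sigma\mid R'\rangle$ is a set $P\subseteq L(\Sigma)\times(L(\Sigma)\cup R')^*$ such that: (indexed) distinct elements of $P$ have distinct labels; (well-founded) for every $(\ell,d)\in P$ and every letter $d_k$ of $d$, either $d_k\in R'$, or $d_k\in L(\Sigma)$ and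 $(d_k,d')\in P$ for some $d'$; (valid) for every $(\ell,d)\in P$ with $\ell=(n,(w,w'))$ and $m=|d|$ there are words $v_1,\dots,v_{m+1}$ with $v_1=w$, $v_{m+1}=w'$ and, for each $k\le m$, $v_k\xrightarrow{d_k}v_{k+1}$ if $d_k\in R'$, and $v_k\xrightarrow{r}v_{k+1}$ if $d_k=(n',r)\in L(\Sigma)$. We write $P\models R$ if $R\subseteq R'\cup\{r\mid((n,r),d)\in P\}$. The derivation graph $\Gamma_D(P)$ has as vertices the labels $\ell$ with $(\ell,d)\in P$, and an edge $(\ell,\ell')$ whenever $\ell'$ occurs as a letter of $d$ for some $(\ell,d)\in P$. A directed graph is acyclic if it has no directed path of positive length from a vertex to itself. *)

(* Defs.v *)
From Stdlib Require Import List Relations.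
Import ListNotations.
Set Implicit Arguments.

Section Defs.
Variable Sigma : Type.

Definition word := list Sigma.
Definition wpair := (word * word)%type.
Definition relset := wpair -> Prop.

Definition subset (A B : relset) : Prop := forall x, A x -> B x.
Definition seteq (A B : relset) : Prop := forall x, A x <-> B x.

Definition step (rho : wpair) (u v : word) : Prop :=
  exists s t, u = s ++ fst rho ++ t /\ v = s ++ snd rho ++ t.

Definition conv (S : relset) : word -> word -> Prop :=
  clos_refl_sym_trans word (fun u v => exists rho, S rho /\ step rho u v).

Definition relplus (S T : relset) : Prop :=
  exists q r, conv S q r /\ seteq T (fun x => S x \/ x = (q, r)).

Fixpoint relplus_seq (m : nat) (S T : relset) : Prop :=
  match m with
  | 0 => seteq S T
  | Datatypes.S m' => exists U, relplus S U /\ relplus_seq m' U T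
  end.

Definition label := (nat * wpair)%type.
(* letters of words over L(Sigma) u R' *)
Definition letter := (label + wpair)%type.
Definition entry := (label * list letter)%type.

Definition rule_of (a : letter) : wpair :=
  match a with inl (_, r) => r | inr rho => rho end.

Fixpoint valid_chain (w : word) (d : list letter) (w' : word) : Prop :=
  match d with
  | [] => w = w'
  | a :: d' => exists v, step (rule_of a) w v /\ valid_chain v d' w'
  end.

Definition deriv_proof (R' : relset) (P : entry -> Prop) : Prop :=
  (forall x y, P x -> P y -> fst x = fst y -> x = y) /\
  (forall l d, P (l, d) -> forall a, In a d ->
     match a with
     | inr rho => R' rho
     | inl l' => exists d', P (l', d')
     end) /\
  (forall n w w' d, P ((n, (w, w')), d) -> valid_chain w d w').

Definition finite_proof (P : entry -> Prop) : Prop :=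
  exists l : list entry, forall x, P x <-> In x l.

Definition models (R' : relset) (P : entry -> Prop) (R : relset) : Prop :=
  forall rho, R rho -> R' rho \/ exists n d, P ((n, rho), d).

Definition dvertex (P : entry -> Prop) (l : label) : Prop := exists d, P (l, d).
Definition dedge (P : entry -> Prop) (l l' : label) : Prop :=
  exists d, P (l, d) /\ In (inl l') d.

Definition acyclic_dgraph (P : entry -> Prop) : Prop :=
  forall l, dvertex P l -> ~ clos_trans label (dedge P) l l.

End Defs.

(* Main.v *)
Require Import Defs.
From Stdlib Require Import List Relations.
From Stdlib Require Import Classical.
Import ListNotations.
Set Implicit Arguments.

Section Aux.
Variable Sigma : Type.

Lemma conv_mono (S S' : relset Sigma) u v :
  subset S S' -> conv S u v -> conv S' u v.
Proof.
  intros HS H; induction H.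
  - apply rst_step. destruct H as [rho [H1 H2]]. exists rho; auto.
  - apply rst_refl.
  - apply rst_sym; auto.
  - eapply rst_trans; eauto.
Qed.

Lemma conv_ctx (S : relset Sigma) q r s t :
  conv S q r -> conv S (s ++ q ++ t) (s ++ r ++ t).
Proof.
  intros H; induction H.
  - apply rst_step. destruct H as [rho [H1 [s' [t' [E1 E2]]]]].
    exists rho; split; auto. exists (s ++ s'), (t' ++ t). subst.
    split; repeat rewrite <- app_assoc; reflexivity.
  - apply rst_refl.
  - apply rst_sym; auto.
  - eapply rst_trans; eauto.
Qed.

Lemma conv_step (S : relset Sigma) rho u v :
  conv S (fst rho) (snd rho) -> step rho u v -> conv S u v.
Proof.
  intros H [s [t [E1 E2]]]; subst. apply conv_ctx; auto.
Qed.

Lemma chain_conv (S : relset Sigma) d : forall w w',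
  (forall a, In a d -> conv S (fst (rule_of a)) (snd (rule_of a))) ->
  valid_chain w d w' -> conv S w w'.
Proof.
  induction d as [|a d IH]; simpl; intros w w' Ha Hc.
  - subst; apply rst_refl.
  - destruct Hc as [v [Hs Hc]].
    eapply rst_trans.
    + eapply conv_step; [apply Ha; auto | exact Hs].
    + apply IH; auto.
Qed.

Fixpoint chain (P : entry Sigma -> Prop) (v : label Sigma) (p : list (label Sigma)) : Prop :=
  match p with
  | [] => True
  | u :: q => dedge P v u /\ chain P u q
  end.

Lemma chain_app P p : forall v u q,
  chain P v (p ++ u :: q) -> clos_trans _ (dedge P) v u /\ chain P u q.
Proof.
  induction p as [|x p IH]; simpl; intros v u q [H1 H2].
  - split; auto. apply t_step; auto.
  - destruct (IH _ _ _ H2) as [A B]. split; auto.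
    eapply t_trans; [apply t_step; eauto | exact A].
Qed.

Lemma notnodup (l : list (label Sigma)) : ~ NoDup l ->
  exists a l1 l2 l3, l = l1 ++ a :: l2 ++ a :: l3.
Proof.
  induction l as [|x l IH]; intros H.
  - exfalso; apply H; constructor.
  - destruct (classic (In x l)) as [Hi|Hi].
    + destruct (in_split _ _ Hi) as [l2 [l3 E]]. exists x, [], l2, l3. subst; reflexivity.
    + destruct (classic (NoDup l)) as [Hn|Hn].
      * exfalso; apply H; constructor; auto.
      * destruct (IH Hn) as [a [l1 [l2 [l3 E]]]]. exists a, (x :: l1), l2, l3. subst; reflexivity.
Qed.

Lemma enum_sub (Q : wpair Sigma -> Prop) (C : list (wpair Sigma)) :
  exists l, forall x, (Q x /\ In x C) <-> In x l.
Proof.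
  induction C as [|c C IH].
  - exists []; simpl; tauto.
  - destruct IH as [l Hl].
    destruct (classic (Q c)) as [Hq|Hq].
    + exists (c :: l). intros x; simpl. specialize (Hl x).
      split.
      * intros [H1 [H2|H2]]; [left; auto | right; tauto].
      * intros [H|H]; [subst; auto | tauto].
    + exists l. intros x; simpl. specialize (Hl x). split.
      * intros [H1 [H2|H2]]; [subst; tauto | tauto].
      * tauto.
Qed.

Lemma enum_nodup (Q : wpair Sigma -> Prop) (C : list (wpair Sigma)) :
  exists l, NoDup l /\ forall x, (Q x /\ In x C) <-> In x l.
Proof.
  induction C as [|c C IH].
  - exists []; split; [constructor|simpl; tauto].
  - destruct IH as [l [Hnd Hl]].
    destruct (classic (Q c /\ ~ In c l)) as [Hq|Hq].
    + exists (c :: l). split; [constructor; tauto|]. intros x; simpl. specialize (Hl x).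
      split.
      * intros [H1 [H2|H2]]; [left; auto | right; tauto].
      * intros [H|H]; [subst; tauto | tauto].
    + exists l. split; auto. intros x; simpl. specialize (Hl x). split.
      * intros [H1 [H2|H2]]; [subst | tauto].
        destruct (classic (In x l)); auto. exfalso; apply Hq; auto.
      * tauto.
Qed.

Lemma relplus_seq_eq m : forall (S T T' : relset Sigma),
  relplus_seq m S T -> seteq T T' -> relplus_seq m S T'.
Proof.
  induction m as [|m IH]; simpl; intros S T T' H E.
  - intros x; rewrite (H x); apply E.
  - destruct H as [U [H1 H2]]. exists U; split; auto. eapply IH; eauto.
Qed.

Lemma build (R' : relset Sigma) l : forall S,
  (forall x, In x l -> conv R' (fst x) (snd x)) -> subset R' S ->
  relplus_seq (length l) S (fun x => S x \/ In x l).
Proof.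
  induction l as [|x l IH]; simpl; intros S Hc HS.
  - intros y; tauto.
  - exists (fun y => S y \/ y = x). split.
    + exists (fst x), (snd x). split.
      * eapply conv_mono; [exact HS | apply Hc; auto].
      * intros y. destruct x; simpl; tauto.
    + eapply relplus_seq_eq.
      * apply IH; auto. intros y Hy; left; auto.
      * intros y; simpl; split; intros H; intuition.
Qed.

End Aux.

Theorem theorem9 (Sigma : Type) (R' R : relset Sigma) (P : entry Sigma -> Prop) :
  subset R' R ->
  deriv_proof R' P ->
  finite_proof P ->
  models R' P R ->
  acyclic_dgraph P ->
  (* l enumerates R \ R' without repetition, so |R \ R'| = length l *)
  exists l : list (wpair Sigma),
    NoDup l /\ (forall x, (R x /\ ~ R' x) <-> In x l) /\
    relplus_seq (length l) R' R.
Proof.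
  intros HRR [Hidx [Hwf Hval]] [E HE] Hmod Hac.
  set (good := fun l : label Sigma => conv R' (fst (snd l)) (snd (snd l))).
  assert (Hsucc_v : forall v u, dedge P v u -> dvertex P u).
  { intros v u [d [Hp Hin]]. exact (Hwf _ _ Hp _ Hin). }
  assert (Hbad : forall v, dvertex P v -> ~ good v ->
            exists u, dedge P v u /\ dvertex P u /\ ~ good u).
  { intros v [d Hp] Hg. apply NNPP; intros Hn. apply Hg.
    destruct v as [n [w w']].
    unfold good; simpl. eapply chain_conv; [|eapply Hval; exact Hp].
    intros a Ha. destruct a as [[n' r']|rho]; simpl.
    - apply NNPP; intros Hc. apply Hn. exists (n', r').
      split; [exists d; auto|]. split; [eapply Hsucc_v; exists d; eauto|].
      exact Hc.
    - apply rst_step. exists rho. split; [exact (Hwf _ _ Hp _ Ha)|].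
      exists [], []. simpl; rewrite !app_nil_r. split; reflexivity. }
  assert (Hch : forall k v, dvertex P v -> ~ good v ->
            exists p, length p = k /\ chain P v p /\ forall u, In u p -> dvertex P u).
  { induction k as [|k IH]; intros v Hv Hg.
    - exists []; simpl; repeat split; tauto.
    - destruct (Hbad v Hv Hg) as [u [H1 [H2 H3]]].
      destruct (IH u H2 H3) as [p [A [B C]]].
      exists (u :: p); simpl; repeat split; auto.
      intros y [Hy|Hy]; [subst; auto| auto]. }
  assert (Hgood : forall v, dvertex P v -> good v).
  { intros v Hv. apply NNPP; intros Hg.
    destruct (Hch (S (length (map (@fst _ _) E))) v Hv Hg) as [p [A [B C]]].
    destruct (classic (NoDup p)) as [Hnd|Hnd].
    - assert (length p <= length (map (@fst _ _) E)).
      { apply NoDup_incl_length; auto. intros u Hu.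
        destruct (C u Hu) as [d Hd]. exact (in_map (@fst _ _) _ _ (proj1 (HE _) Hd)). }
      rewrite A in H. exact (PeanoNat.Nat.nle_succ_diag_l _ H).
    - destruct (notnodup Hnd) as [a [l1 [l2 [l3 Ep]]]]. subst p.
      destruct (chain_app _ _ _ _ _ B) as [_ B2].
      destruct (chain_app _ _ _ _ _ B2) as [Ct _].
      apply (Hac a); auto. apply C. apply in_or_app; simpl; auto. }
  destruct (enum_nodup (fun x => R x /\ ~ R' x) (map (fun e => snd (fst e)) E))
    as [l [Hnd Hl]].
  assert (Hl' : forall x, (R x /\ ~ R' x) <-> In x l).
  { intros x; rewrite <- Hl. split; [|tauto]. intros [H1 H2]; split; [tauto|].
    destruct (Hmod x H1) as [H|[n [d H]]]; [tauto|].
    exact (in_map (fun e : entry Sigma => snd (fst e)) _ _ (proj1 (HE _) H)). }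
  exists l; split; auto; split; auto.
  eapply relplus_seq_eq.
  - apply (build (R':=R')).
    + intros x Hx. apply Hl' in Hx. destruct Hx as [H1 H2].
      destruct (Hmod x H1) as [H|[n [d H]]]; [tauto|].
      exact (Hgood (n, x) (ex_intro _ d H)).
    + intros y; auto.
  - intros x; simpl. split.
    + intros [H|H]; [auto|]. apply Hl' in H; tauto.
    + intros H. destruct (classic (R' x)); [auto|]. right; apply Hl'; auto.
Qed.
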